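(* There are constants $c,C>0$ such that for all sufficiently large $n$ and all $p,q\in(0,1)$ with $\hat p=\frac{p}{p+q}\ge c\frac{\log n}{n}$, with probability at least $1-1/n$ the flooding time of the stationary edge-MEG $\mathcal{M}(n,p,q)$ is at least $C\,\frac{\log n}{\log(n\hat p)}$.
   Context: The edge-MEG $\mathcal{M}(n,p,q)=\{G_t\}$ on node set $[n]$: for each pair $e\in\binom{[n]}{2}$ there is an independent two-state Markov chain $X_t(e)\in\{0,1\}$ with $\Pr[X_{t+1}(e)=1\mid X_t(e)=0]=p$ and $\Pr[X_{t+1}(e)=0\mid X_t(e)=1]=q$; $G_t=([n],\{e:X_t(e)=1\})$. It is stationary when $G_0$ is drawn from the stationary distribution, which is the Erdős–Rényi graph $G_{n,\hat p}$, $\hat p=p/(p+q)$ (so every $G_t$ has law $G_{n,\hat p}$). Flooding from source $s$: $I_0=\{s\}$, $I_{t+1}=I_t\cup N_t(I_t)$ where $N_t(I)$ is the set of nodes outside $I$ adjacent in $G_t$ to some node of $I$; $T(s)$ is the first $t$ with $I_t=[n]$; the flooding time is $\max_s T(s)$. Logarithms are natural. *)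

(* Defs.v *)
From Stdlib Require Import Reals ZArith.
From mathcomp Require Import all_boot.
Set Implicit Arguments. Unset Strict Implicit. Unset Printing Implicit Defensive.

Definition Rsum_fin (T : finType) (f : T -> R) : R :=
  foldr (fun x a => Rplus (f x) a) R0 (enum T).
Definition Rprod_fin (T : finType) (f : T -> R) : R :=
  foldr (fun x a => Rmult (f x) a) R1 (enum T).
Definition Rprod_seq (T : Type) (s : seq T) (f : T -> R) : R :=
  foldr (fun x a => Rmult (f x) a) R1 s.

Definition Rltb (a b : R) : bool := if Rlt_dec a b then true else false.

(* Unordered pairs {i,j} of [n], encoded as (i,j) with i < j. *)
Definition edge (n : nat) := {e : 'I_n * 'I_n | (e.1 < e.2)%N}.

Definition graph (n : nat) := {ffun edge n -> bool}.

Definition adj (n : nat) (G : graph n) (u v : 'I_n) : bool :=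
  [exists e : edge n, G e && ((val e == (u, v)) || (val e == (v, u)))].

Definition empty_graph (n : nat) : graph n := [ffun _ => false].

Definition traj (n H : nat) := {ffun 'I_H.+1 -> graph n}.

Definition Gat (n H : nat) (tr : traj n H) (t : nat) : graph n :=
  match @insub nat (fun k => (k < H.+1)%N) 'I_H.+1 t with
  | Some i => tr i
  | None => empty_graph n
  end.

Fixpoint flood (n H : nat) (tr : traj n H) (s : 'I_n) (t : nat) : {set 'I_n} :=
  match t with
  | 0 => [set s]
  | t'.+1 =>
      let I := flood tr s t' in
      I :|: [set v | (v \notin I) && [exists u in I, adj (Gat tr t') u v]]
  end.

Definition phat (p q : R) : R := Rdiv p (Rplus p q).

Definition init_prob (p q : R) (b : bool) : R :=
  if b then phat p q else Rminus R1 (phat p q).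

Definition trans_prob (p q : R) (a b : bool) : R :=
  match a, b with
  | false, true => p
  | false, false => Rminus R1 p
  | true, false => q
  | true, true => Rminus R1 q
  end.

(* Probability of the trajectory G_0..G_H in the stationary edge-MEG M(n,p,q):
   independent chains on all pairs, each started from its stationary law. *)
Definition traj_weight (n H : nat) (p q : R) (tr : traj n H) : R :=
  Rprod_fin (fun e : edge n =>
    Rmult (init_prob p q (Gat tr 0 e))
     (Rprod_seq (iota 0 H) (fun t => trans_prob p q (Gat tr t e) (Gat tr t.+1 e)))).

Definition Prob (n H : nat) (p q : R) (E : traj n H -> bool) : R :=
  Rsum_fin (fun tr : traj n H => if E tr then traj_weight p q tr else R0).

(* Event "flooding time >= x" (x real): for some source s, no time t < x has
   I_t(s) = [n], i.e. max_s T(s) >= x (T(s) possibly infinite). *)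
Definition flood_time_ge (n H : nat) (x : R) (tr : traj n H) : bool :=
  [exists s : 'I_n, [forall t : 'I_H.+1,
     Rltb (INR t) x ==> (flood tr s t != [set: 'I_n])]].

(* Horizon H = up x >= every integer t < x, so the event only involves G_0..G_H. *)
Definition flood_time_ge_prob (n : nat) (p q x : R) : R :=
  Prob (H := Z.to_nat (up x)) p q (@flood_time_ge n (Z.to_nat (up x)) x).

(* Main.v *)
Require Import Defs.
From Stdlib Require Import Reals.
From mathcomp Require Import all_boot.
Local Open Scope R_scope.
From Stdlib Require Import Lra Lia FunctionalExtensionality.
From Stdlib Require ZArith.Znat.
From mathcomp Require Import all_order all_algebra.
From mathcomp Require Import Rstruct.
From mathcomp Require Import ring.
Set Implicit Arguments. Unset Strict Implicit. Unset Printing Implicit Defensive.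
Import Order.TTheory GRing.Theory Num.Theory.

Lemma Rsum_finE (T : finType) (f : T -> R) : Rsum_fin f = (\sum_(x : T) f x)%R.
Proof. rewrite /Rsum_fin -big_enum /= unlock /reducebig. by elim: (enum T) => //= x s ->. Qed.
Lemma Rprod_finE (T : finType) (f : T -> R) : Rprod_fin f = (\prod_(x : T) f x)%R.
Proof. rewrite /Rprod_fin -big_enum /= unlock /reducebig. by elim: (enum T) => //= x s ->. Qed.
Lemma Rprod_seqE (T : Type) s (f : T -> R) : Rprod_seq s f = (\prod_(x <- s) f x)%R.
Proof. rewrite /Rprod_seq unlock /reducebig. by elim: s => //= x s ->. Qed.

Local Open Scope ring_scope.

Definition ygat (m : nat) (y : {ffun 'I_m -> bool}) (t : nat) : bool :=
  if (insub t : option 'I_m) is Some i then y i else false.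

Definition fcons (k : nat) (b : bool) (z : {ffun 'I_k -> bool}) : {ffun 'I_k.+1 -> bool} :=
  [ffun i : 'I_k.+1 => if unlift ord0 i is Some j then z j else b].

Lemma ygat_fcons0 k (b : bool) (z : {ffun 'I_k -> bool}) : ygat (fcons b z) 0 = b.
Proof.
rewrite /ygat; case: (insubP _ 0) => [i _ vi | //].
have -> : i = ord0 by apply: val_inj.
by rewrite ffunE unlift_none.
Qed.

Lemma ygat_fconsS k (b : bool) (z : {ffun 'I_k -> bool}) t : ygat (fcons b z) t.+1 = ygat z t.
Proof.
rewrite /ygat; case: (insubP _ t.+1) => [i Hi vi | ni]; case: (insubP _ t) => [j Hj vj | nj] //=.
- have -> : i = lift ord0 j by apply: val_inj; rewrite vi /= vj.
  by rewrite ffunE liftK.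
- by move: Hi nj; rewrite ltnS => ->.
- by move: Hj ni; rewrite ltnS => ->.
Qed.

Lemma sum_fcons k (F : {ffun 'I_k.+1 -> bool} -> R) :
  \sum_(y : {ffun 'I_k.+1 -> bool}) F y = \sum_(b : bool) \sum_(z : {ffun 'I_k -> bool}) F (fcons b z).
Proof.
rewrite pair_big /=.
rewrite (reindex (fun bz : bool * {ffun 'I_k -> bool} => fcons bz.1 bz.2)) //=.
exists (fun y : {ffun 'I_k.+1 -> bool} => (y ord0, [ffun j => y (lift ord0 j)])).
- move=> [b z] _ /=; congr (_, _); first by rewrite ffunE unlift_none.
  apply/ffunP => j; rewrite !ffunE.
  by rewrite (@liftK k.+1 ord0 j).
- move=> y _ /=; apply/ffunP => i; rewrite ffunE.
  case: (unliftP ord0 i) => [j -> | ->]; last by [].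
  by rewrite ffunE.
Qed.

Definition Ssum (m : bool -> bool -> R) (k : nat) (a : bool -> R) (h : nat -> bool -> R) : R :=
  \sum_(y : {ffun 'I_k.+1 -> bool}) (a (ygat y 0) *
     (\prod_(t <- iota 0 k) m (ygat y t) (ygat y t.+1)) *
     \prod_(t <- iota 0 k.+1) h t (ygat y t)).

Lemma prod_iota_shift (f : nat -> R) j k :
  \prod_(t <- iota j.+1 k) f t = \prod_(t <- iota j k) f t.+1.
Proof. by rewrite -addn1 addnC iotaDl big_map. Qed.

Lemma sum_ffun0 (F : {ffun 'I_0 -> bool} -> R) c : (forall z, F z = c) -> \sum_z F z = c.
Proof.
move=> HF; rewrite (eq_bigr (fun _ => c)) // sumr_const card_ffun card_ord expn0.
by rewrite mulr1n.
Qed.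

Lemma Ssum0 m a h : Ssum m 0 a h = \sum_(b : bool) a b * h 0%N b.
Proof.
rewrite /Ssum sum_fcons; apply: eq_bigr => b _.
apply: sum_ffun0 => z.
by rewrite big_nil mulr1 big_cons big_nil mulr1 ygat_fcons0.
Qed.

Lemma SsumS m k a h : Ssum m k.+1 a h =
  \sum_(b : bool) a b * h 0%N b * Ssum m k (m b) (fun t => h t.+1).
Proof.
rewrite /Ssum sum_fcons; apply: eq_bigr => b _.
rewrite big_distrr /=; apply: eq_bigr => z _.
rewrite !big_cons !prod_iota_shift !ygat_fcons0 !ygat_fconsS.
under eq_bigr do rewrite !ygat_fconsS.
under [X in _ * (h 0%N b * (_ * X)) = _]eq_bigr do rewrite ygat_fconsS.
ring.
Qed.

Lemma sum_bool (f : bool -> R) : \sum_(b : bool) f b = f true + f false.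
Proof. by rewrite big_bool. Qed.

Lemma Ssum_one m k a : (forall b, m b true + m b false = 1) ->
  Ssum m k a (fun _ _ => 1) = a true + a false.
Proof.
move=> Hm; elim: k a => [|k IH] a.
  by rewrite Ssum0 sum_bool !mulr1.
rewrite SsumS sum_bool !IH !Hm; ring.
Qed.

Lemma Ssum_lin m k a h :
  Ssum m k (fun c => \sum_(b : bool) a b * m b c) h = \sum_(b : bool) a b * Ssum m k (m b) h.
Proof.
rewrite /Ssum; under eq_bigr do rewrite !mulr_suml.
rewrite exchange_big /=; apply: eq_bigr => b _; rewrite big_distrr /=.
by apply: eq_bigr => y _; ring.
Qed.

Definition delta (j : nat) (t : nat) (b : bool) : R := if t == j then (if b then 1 else 0) else 1.

Lemma Ssum_delta m j : forall k a, (j <= k)%N ->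
  (forall b, m b true + m b false = 1) ->
  (forall c, \sum_(b : bool) a b * m b c = a c) ->
  Ssum m k a (delta j) = a true.
Proof.
elim: j => [|j IH] [|k] a //= Hjk Hm Hst.
- by rewrite Ssum0 sum_bool /delta /=; ring.
- rewrite SsumS.
  have -> : (fun t => delta 0 t.+1) = (fun _ _ => 1).
    by apply: functional_extensionality => t; apply: functional_extensionality.
  rewrite sum_bool !Ssum_one // Hm /delta /=; ring.
- rewrite SsumS.
  have -> : (fun t => delta j.+1 t.+1) = delta j.
    by apply: functional_extensionality => t; apply: functional_extensionality => b; rewrite /delta eqSS.
  have -> : \sum_(b : bool) a b * delta j.+1 0 b * Ssum m k (m b) (delta j) =
            \sum_(b : bool) a b * Ssum m k (m b) (delta j).
    by apply: eq_bigr => b _; rewrite /delta /= mulr1.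
  rewrite -Ssum_lin.
  have -> : (fun c => \sum_(b : bool) a b * m b c) = a by apply: functional_extensionality.
  exact: IH.
Qed.

Definition W (p q : R) (H : nat) (y : {ffun 'I_H.+1 -> bool}) : R :=
  init_prob p q (ygat y 0) * \prod_(t <- iota 0 H) trans_prob p q (ygat y t) (ygat y t.+1).

Lemma R1_one : R1 = 1. Proof. by []. Qed.
Lemma R0_zero : R0 = 0. Proof. by []. Qed.
Lemma trans_row p q b : trans_prob p q b true + trans_prob p q b false = 1.
Proof. by case: b => /=; rewrite ?RminusE ?R1_one; ring. Qed.

Lemma trans_stat p q c : (p + q != 0) ->
  \sum_(b : bool) init_prob p q b * trans_prob p q b c = init_prob p q c.
Proof.
move=> Hpq; rewrite sum_bool /init_prob /phat.
case: c => /=; rewrite ?RminusE ?RdivE ?RplusE ?R1_one; field; by [].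
Qed.

Lemma sumW_one p q H : \sum_(y : {ffun 'I_H.+1 -> bool}) W p q y = 1.
Proof.
have -> : \sum_(y : {ffun 'I_H.+1 -> bool}) W p q y = Ssum (trans_prob p q) H (init_prob p q) (fun _ _ => 1).
  by rewrite /Ssum; apply: eq_bigr => y _; rewrite big1_eq mulr1.
rewrite (Ssum_one _ _ (@trans_row p q)).
by rewrite /init_prob RminusE R1_one; ring.
Qed.

Lemma prod_delta (t K : nat) (f : nat -> bool) : (t < K)%N ->
  \prod_(s <- iota 0 K) delta t s (f s) = (if f t then 1 else 0).
Proof.
move=> HtK; rewrite /delta.
rewrite -(big_mkcond (fun s => s == t) (fun s => if f s then 1 else 0)) /=.
rewrite -big_filter (@filter_pred1_uniq _ (iota 0 K) t) ?iota_uniq ?mem_iota //.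
by rewrite big_seq1.
Qed.

Lemma sumW_t p q H t : (p + q != 0) -> (t <= H)%N ->
  \sum_(y : {ffun 'I_H.+1 -> bool}) (if ygat y t then W p q y else 0) = phat p q.
Proof.
move=> Hpq HtH.
have -> : \sum_(y : {ffun 'I_H.+1 -> bool}) (if ygat y t then W p q y else 0) =
   Ssum (trans_prob p q) H (init_prob p q) (delta t).
  rewrite /Ssum; apply: eq_bigr => y _; rewrite prod_delta ?ltnS //.
  by rewrite /W; case: ifP => _; rewrite ?mulr1 ?mulr0.
rewrite Ssum_delta //; first exact: trans_row.
by move=> c; apply: trans_stat.
Qed.

Definition col (n H : nat) (tr : traj n H) (e : edge n) : {ffun 'I_H.+1 -> bool} :=
  [ffun i => tr i e].

Lemma Gat_col n H (tr : traj n H) t e : Gat tr t e = ygat (col tr e) t.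
Proof. by rewrite /Gat /ygat; case: insub => [i|] //=; rewrite ?ffunE. Qed.

Lemma weightE n H p q (tr : traj n H) :
  traj_weight p q tr = \prod_(e : edge n) W p q (col tr e).
Proof.
rewrite /traj_weight Rprod_finE; apply: eq_bigr => e _.
rewrite Rprod_seqE /W Gat_col; congr (_ * _); apply: eq_bigr => t _.
by rewrite !Gat_col.
Qed.

Definition untp (n H : nat) (M : {ffun edge n -> {ffun 'I_H.+1 -> bool}}) : traj n H :=
  [ffun i => [ffun e => M e i]].

Lemma col_untp n H (M : {ffun edge n -> {ffun 'I_H.+1 -> bool}}) e : col (untp M) e = M e.
Proof. by apply/ffunP => i; rewrite !ffunE. Qed.

Lemma sum_traj n H (F : traj n H -> R) :
  \sum_(tr : traj n H) F tr = \sum_(M : {ffun edge n -> {ffun 'I_H.+1 -> bool}}) F (untp M).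
Proof.
rewrite (reindex (@untp n H)) //.
exists (fun tr : traj n H => [ffun e => col tr e]).
- by move=> M _; apply/ffunP => e; rewrite ffunE col_untp.
- by move=> tr _; apply/ffunP => i; apply/ffunP => e; rewrite !ffunE.
Qed.

Lemma if_forall_prod (I : finType) (b : I -> bool) (f : I -> R) :
  (if [forall i, b i] then \prod_i f i else 0) = \prod_i (if b i then f i else 0).
Proof.
case: ifP => [/forallP Hb | /negbT]; first by apply: eq_bigr => i _; rewrite Hb.
rewrite negb_forall => /existsP [i /negbTE Hi].
by rewrite (bigD1 i) //= Hi mul0r.
Qed.

Lemma Prob_prod n H p q (E : traj n H -> bool) (P : edge n -> pred {ffun 'I_H.+1 -> bool}) :
  (forall tr, E tr = [forall e, P e (col tr e)]) ->
  Prob p q E = \prod_(e : edge n) \sum_(y : {ffun 'I_H.+1 -> bool}) (if P e y then W p q y else 0).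
Proof.
move=> HE; rewrite /Prob Rsum_finE sum_traj bigA_distr_bigA /=.
apply: eq_bigr => M _; rewrite HE weightE R0_zero if_forall_prod.
by apply: eq_bigr => e _; rewrite col_untp.
Qed.

Lemma Prob_true n H p q : Prob (H := H) (n := n) p q (fun _ => true) = 1.
Proof.
rewrite (@Prob_prod n H p q _ (fun _ _ => true)); last by move=> tr; apply/esym/forallP.
by rewrite big1 // => e _; rewrite sumW_one.
Qed.

Lemma Prob_edges n H p q t (A : {set edge n}) : (p + q != 0) -> (t <= H)%N ->
  Prob (H := H) p q (fun tr => [forall e in A, Gat tr t e]) = phat p q ^+ #|A|.
Proof.
move=> Hpq HtH.
rewrite (@Prob_prod n H p q _ (fun e y => (e \in A) ==> ygat y t)); last first.
  by move=> tr; apply: eq_forallb => e; rewrite Gat_col.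
rewrite -prodr_const [RHS]big_mkcond /=; apply: eq_bigr => e _.
case: (e \in A) => /=; first exact: sumW_t.
exact: sumW_one.
Qed.

Lemma W_ge0 p q H (y : {ffun 'I_H.+1 -> bool}) : (0 < p < 1)%R -> (0 < q < 1)%R -> 0 <= W p q y.
Proof.
move=> /andP [p0 p1] /andP [q0 q1].
have ph0 : 0 <= phat p q.
  rewrite /phat RdivE RplusE; apply: divr_ge0; first exact: ltW.
  by apply: addr_ge0; exact: ltW.
have ph1 : phat p q <= 1.
  rewrite /phat RdivE RplusE ler_pdivrMr; last by apply: addr_gt0.
  by rewrite mul1r lerDl ltW.
rewrite /W mulr_ge0 //.
  by case: (ygat y 0); rewrite /init_prob ?RminusE ?R1_one ?subr_ge0.
apply: prodr_ge0 => t _.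
by case: (ygat y t); case: (ygat y t.+1); rewrite /= ?RminusE ?R1_one ?subr_ge0 ltW.
Qed.

Lemma Prob_union n H p q (I : finType) (B : I -> traj n H -> bool) (E : traj n H -> bool) :
  (0 < p < 1)%R -> (0 < q < 1)%R ->
  (forall tr, ~~ E tr -> exists i, B i tr) ->
  1 - \sum_(i : I) Prob p q (B i) <= Prob p q E.
Proof.
move=> Hp Hq HB.
have w0 : forall tr : traj n H, 0 <= traj_weight p q tr.
  by move=> tr; rewrite weightE; apply: prodr_ge0 => e _; apply: W_ge0.
rewrite -(Prob_true n H p q) lerBlDr /Prob !Rsum_finE.
under [X in _ <= _ + X]eq_bigr do rewrite Rsum_finE.
rewrite [X in _ <= _ + X]exchange_big /= -big_split /=; apply: ler_sum => tr _.
case: ifP => HE; first by rewrite R0_zero lerDl sumr_ge0 // => i _; by case: ifP => _; [exact: w0 | exact: lexx].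
have [i Hi] := HB tr (negbT HE).
rewrite R0_zero add0r (bigD1 i) //= Hi lerDl sumr_ge0 // => j _; case: ifP => _; [exact: w0 | exact: lexx].
Qed.

Local Close Scope ring_scope.

Definition nbr (n : nat) (G : graph n) (u : 'I_n) : {set 'I_n} := [set v | adj G u v].

Lemma card_bigcup_le (T I : finType) (P : pred I) (F : I -> {set T}) :
  (#|\bigcup_(i | P i) F i| <= \sum_(i | P i) #|F i|)%N.
Proof.
apply: (big_ind2 (fun (A : {set T}) (m : nat) => #|A| <= m)%N) => //.
- by rewrite cards0.
- move=> A1 m1 A2 m2 h1 h2; rewrite cardsU.
  apply: leq_trans (leq_subr _ _) _; exact: leq_add.
Qed.

Lemma flood_sub n H (tr : traj n H) s t :
  flood tr s t.+1 \subset flood tr s t :|: \bigcup_(u in flood tr s t) nbr (Gat tr t) u.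
Proof.
apply/subsetP => v; rewrite /= !inE => /orP [-> //| /andP [_ /existsP [u /andP [uI Huv]]]].
rewrite orbC; apply/orP; left; apply/bigcupP; exists u => //.
by rewrite inE.
Qed.

Lemma flood_growth n H (tr : traj n H) s D T :
  (forall t, (t < T)%N -> forall u, (#|nbr (Gat tr t) u| < D)%N) ->
  forall t, (t <= T)%N -> (#|flood tr s t| <= D ^ t)%N.
Proof.
move=> HD; elim=> [|t IH] Ht; first by rewrite cards1.
apply: leq_trans (subset_leq_card (flood_sub tr s t)) _.
rewrite cardsU; apply: leq_trans (leq_subr _ _) _.
apply: leq_trans (leq_add (leqnn _) (card_bigcup_le _ _)) _.
have h1 : (\sum_(u in flood tr s t) #|nbr (Gat tr t) u| <= #|flood tr s t| * D.-1)%N.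
  rewrite -sum_nat_const; apply: leq_sum => u _.
  by rewrite -ltnS; apply: leq_trans (HD t Ht u) _; apply: leqSpred.
apply: leq_trans (leq_add (leqnn _) h1) _.
rewrite -{1}(muln1 #|_|) -mulnDr expnS mulnC.
have IH' := IH (ltnW Ht).
clear IH h1; case: D HD IH' => [|D] HD IH' /=.
  by move: (HD t Ht s); rewrite ltn0.
by rewrite add1n leq_mul2l IH' orbT.
Qed.

Lemma exists_sub_card (T : finType) (A : {set T}) k : (k <= #|A|)%N ->
  exists S : {set T}, S \subset A /\ #|S| = k.
Proof.
elim: k => [|k IH] Hk; first by exists set0; rewrite sub0set cards0.
have [S [SA cS]] := IH (ltnW Hk).
have : (A :\: S) != set0.
  apply/eqP => h; move: (cardsD A S); rewrite h cards0 (setIidPr SA) cS => /esym/eqP.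
  by rewrite subn_eq0 leqNgt Hk.
case/set0Pn => x; rewrite inE => /andP [xS xA].
exists (x |: S); split; first by rewrite subUset sub1set xA SA.
by rewrite cardsU1 xS cS.
Qed.

Definition Aset (n : nat) (v : 'I_n) (S : {set 'I_n}) : {set edge n} :=
  [set e : edge n | [exists u in S, (val e == (v, u)) || (val e == (u, v))]].

Lemma edge_exists n (v u : 'I_n) : v != u ->
  exists e : edge n, (val e == (v, u)) || (val e == (u, v)).
Proof.
move=> vu; case: (ltngtP v u) => h.
- by exists (exist _ (v, u) h); rewrite eqxx.
- by exists (exist _ (u, v) h); rewrite eqxx orbT.
- by move: vu; rewrite (val_inj h) eqxx.
Qed.

Lemma card_Aset n (v : 'I_n) (S : {set 'I_n}) : v \notin S -> (#|S| <= #|Aset v S|)%N.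
Proof.
move=> vS.
pose f := fun e : edge n => if (val e).1 == v then (val e).2 else (val e).1.
apply: leq_trans (leq_imset_card f (Aset v S)); apply: subset_leq_card.
apply/subsetP => u uS.
have vu : v != u by apply: contraNneq vS => ->.
have [e He] := edge_exists vu.
apply/imsetP; exists e.
  by rewrite inE; apply/existsP; exists u; rewrite uS He.
rewrite /f; case/orP: He => /eqP -> /=; first by rewrite eqxx.
by rewrite eq_sym (negbTE vu).
Qed.

Lemma adj_irr n (G : graph n) u : adj G u u = false.
Proof.
apply/negbTE/existsP => [[e /andP [_ /orP [] /eqP h]]];
  by move: (valP e); rewrite h ltnn.
Qed.

Lemma edge_eq n (e e' : edge n) u w :
  (val e == (u, w)) || (val e == (w, u)) -> (val e' == (u, w)) || (val e' == (w, u)) -> e = e'.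
Proof.
move=> h h'; apply: val_inj.
have ve := valP e; have ve' := valP e'.
case/orP: h => /eqP h; case/orP: h' => /eqP h'; rewrite h h' //.
- by move: ve ve'; rewrite h h' /= => a b; move: (ltn_trans a b); rewrite ltnn.
- by move: ve ve'; rewrite h h' /= => a b; move: (ltn_trans a b); rewrite ltnn.
Qed.

Lemma deg_bad n (G : graph n) u D : (D <= #|nbr G u|)%N ->
  exists S : {set 'I_n}, [/\ u \notin S, #|S| = D & [forall e in Aset u S, G e]].
Proof.
move=> HD; have [S [SN cS]] := exists_sub_card HD.
exists S; split => //.
  by apply/negP => /(subsetP SN); rewrite inE adj_irr.
apply/forall_inP => e; rewrite inE => /existsP [w /andP [wS Hw]].
move: (subsetP SN w wS); rewrite inE => /existsP [e' /andP [Ge' He']].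
by rewrite (edge_eq Hw He').
Qed.

Local Open Scope ring_scope.

Lemma Prob_false n H p q : Prob (n := n) (H := H) p q (fun _ => false) = 0.
Proof. by rewrite /Prob Rsum_finE big1. Qed.

Lemma phat_ge0 p q : (0 < p < 1)%R -> (0 < q < 1)%R -> 0 <= phat p q.
Proof.
move=> /andP [p0 p1] /andP [q0 q1].
rewrite /phat RdivE RplusE; apply: divr_ge0; first exact: ltW.
by apply: addr_ge0; exact: ltW.
Qed.

Lemma phat_le1 p q : (0 < p < 1)%R -> (0 < q < 1)%R -> phat p q <= 1.
Proof.
move=> /andP [p0 p1] /andP [q0 q1].
rewrite /phat RdivE RplusE ler_pdivrMr; last by apply: addr_gt0.
by rewrite mul1r lerDl ltW.
Qed.

Lemma main_bound n H p q x D : (0 < p < 1)%R -> (0 < q < 1)%R -> (0 < n)%N ->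
  (forall t : nat, (t <= H)%N -> (INR t < x)%R -> (D ^ t < n)%N) ->
  1 - (H.+1)%:R * n%:R * 'C(n, D)%:R * phat p q ^+ D <= Prob p q (@flood_time_ge n H x).
Proof.
move=> Hp Hq n0 HDt.
pose B := fun (i : 'I_H.+1 * 'I_n * {set 'I_n}) =>
  if (i.1.2 \notin i.2) && (#|i.2| == D) then (fun tr : traj n H => [forall e in Aset i.1.2 i.2, Gat tr i.1.1 e])
  else (fun _ => false).
have Hpq : p + q != 0.
  by case/andP: Hp => p0 _; case/andP: Hq => q0 _; rewrite gt_eqF // addr_gt0.
have ph0 := phat_ge0 Hp Hq; have ph1 := phat_le1 Hp Hq.
apply: (le_trans _ (@Prob_union n H p q _ B _ Hp Hq _)).
- rewrite lerB //.
  apply: (@le_trans _ _ (\sum_(i : 'I_H.+1 * 'I_n * {set 'I_n}) (if #|i.2| == D then phat p q ^+ D else 0))).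
    apply: ler_sum => [[[t v] S]] _ /=; rewrite /B /=.
    case: ifP => [/andP [vS /eqP cS] | _]; last by rewrite Prob_false; case: ifP => _; [exact: exprn_ge0 | exact: lexx].
    rewrite cS eqxx Prob_edges //; last by rewrite -ltnS.
    apply: ler_wiXn2l => //; rewrite -cS; exact: card_Aset.
  rewrite -(pair_bigA _ (fun (tv : 'I_H.+1 * 'I_n) (S : {set 'I_n}) => if #|S| == D then phat p q ^+ D else 0)) /=.
  have -> : \sum_(S : {set 'I_n}) (if #|S| == D then phat p q ^+ D else 0) = 'C(n, D)%:R * phat p q ^+ D.
    rewrite -big_mkcond /= sumr_const mulr_natl.
    congr (_ *+ _); have -> : 'C(n, D) = 'C(#|'I_n|, D) by rewrite card_ord.
    rewrite -card_draws.
    by apply: eq_card => S; rewrite inE.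
  rewrite sumr_const card_prod !card_ord -[_ *+ (H.+1 * n)]mulr_natl natrM.
  by rewrite le_eqVlt; apply/orP; left; apply/eqP; ring.
- move=> tr HE; case: (boolP [exists i, B i tr]) => [/existsP //| Hno].
  have Hdeg : forall t, (t <= H)%N -> forall u, (#|nbr (Gat tr t) u| < D)%N.
    move=> t tH u; rewrite ltnNge; apply/negP => /deg_bad [S [uS cS HS]].
    apply: (negP Hno); apply/existsP; exists (inord t, u, S).
    by rewrite /B /= uS cS eqxx /= inordK ?ltnS.
  case/negP: HE.
  apply/existsP; exists (Ordinal n0); apply/forallP => t; apply/implyP => Hx.
  apply/negP => /eqP Hfull.
  have Hxt : (INR t < x)%R by move: Hx; rewrite /Defs.Rltb; case: (Rlt_dec (INR t) x) => [h _|] //; apply/RltP.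
  have Hg := @flood_growth n H tr (Ordinal n0) D H.+1 Hdeg t (ltnW (ltn_ord t)).
  have := HDt t (ltn_ord t : (t <= H)%N) Hxt.
  by rewrite ltnNge -{1}(card_ord n) -cardsT -Hfull Hg.
Qed.

Local Close Scope ring_scope.
Local Open Scope R_scope.
Import Stdlib.setoid_ring.Ring_tac Stdlib.setoid_ring.Field_tac.


Lemma exp_mulk (a : R) (k : nat) : exp (INR k * a) = exp a ^ k.
Proof.
elim: k => [|k IH]; first by rewrite Rmult_0_l exp_0.
rewrite S_INR Rmult_plus_distr_r Rmult_1_l exp_plus IH /=; ring.
Qed.

Lemma pow1D_le (D : nat) : (INR D + 1) ^ D <= INR D ^ D * exp 1.
Proof.
case: D => [|D]; first by rewrite /= Rmult_1_l; have := exp_ineq1_le 1; lra.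
set d := INR D.+1.
have d0 : 0 < d by apply: lt_0_INR; lia.
have -> : d + 1 = d * (1 + / d) by field; lra.
rewrite Rpow_mult_distr; apply: Rmult_le_compat_l; first by apply: pow_le; lra.
have -> : exp 1 = exp (/ d) ^ D.+1.
  by rewrite -exp_mulk; congr exp; rewrite -/d; field; lra.
apply: pow_incr; split; first by have := Rinv_0_lt_compat d d0; lra.
exact: exp_ineq1_le.
Qed.

Lemma fact_bound (D : nat) : INR D ^ D <= INR (D`!) * exp (INR D).
Proof.
elim: D => [|D IH]; first by rewrite /= exp_0 /factorial /=; lra.
rewrite factS mult_INR S_INR.
have h1 := pow1D_le D.
have e0 := exp_pos (INR D).
have D0 := pos_INR D.
rewrite -tech_pow_Rmult exp_plus.
have hf : 0 <= INR (D`!) by apply: pos_INR.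
apply: Rle_trans (Rmult_le_compat_l (INR D + 1) _ _ _ h1) _; first lra.
have := Rmult_le_compat_r (exp 1) _ _ (Rlt_le _ _ (exp_pos 1)) IH.
move=> h2.
have := Rmult_le_compat_l (INR D + 1) _ _ ltac:(lra) h2.
lra.
Qed.

Lemma ffact_le_pow n m : (n ^_ m <= n ^ m)%N.
Proof.
rewrite ffact_prod.
have -> : (n ^ m = \prod_(i < m) n)%N by rewrite prod_nat_const card_ord.
by apply: leq_prod => i _; apply: leq_subr.
Qed.

Lemma binom_bound n D : INR 'C(n, D) * INR (D`!) <= INR n ^ D.
Proof.
rewrite -mult_INR -pow_INR; apply: le_INR; apply/ssrnat.leP.
have -> : Nat.pow n D = expn n D.
  by elim: D => [|D IH] //=; rewrite expnS IH.
by rewrite multE bin_ffact ffact_le_pow.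
Qed.

Lemma tail_bound n D ph : 0 <= ph -> 0 < INR n * ph -> 9 * (INR n * ph) <= INR D ->
  INR 'C(n, D) * ph ^ D * 3 ^ D <= 1.
Proof.
move=> ph0 mu0 HD.
set C := INR 'C(n, D); set F := INR (D`!); set d := INR D.
have d0 : 0 < d by rewrite /d; nra.
have C0 : 0 <= C by apply: pos_INR.
have hb : C * F <= INR n ^ D := binom_bound n D.
have hf : d ^ D <= F * exp d := fact_bound D.
have e3 : exp 1 <= 3 := exp_le_3.
have e1 : 0 < exp 1 := exp_pos 1.
have ed : exp d = exp 1 ^ D by rewrite /d -exp_mulk Rmult_1_r.
have p0 : 0 <= ph ^ D * 3 ^ D by apply: Rmult_le_pos; apply: pow_le; lra.
have s1 : C * ph ^ D * 3 ^ D * d ^ D <= C * ph ^ D * 3 ^ D * (F * exp d).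
  apply: Rmult_le_compat_l => //; rewrite Rmult_assoc; exact: Rmult_le_pos.
have s2 : C * ph ^ D * 3 ^ D * (F * exp d) <= (INR n * ph * 3 * exp 1) ^ D.
  rewrite !Rpow_mult_distr ed.
  have := Rmult_le_compat_r (ph ^ D * 3 ^ D * exp 1 ^ D) _ _ _ hb.
  have : 0 <= ph ^ D * 3 ^ D * exp 1 ^ D.
    apply: Rmult_le_pos => //; apply: pow_le; lra.
  move=> h /(_ h); lra.
have s3 : (INR n * ph * 3 * exp 1) ^ D <= d ^ D.
  apply: pow_incr; split.
    apply: Rmult_le_pos; [nra | lra].
  have : INR n * ph * 3 * exp 1 <= INR n * ph * 3 * 3.
    apply: Rmult_le_compat_l => //; nra.
  rewrite /d; nra.
have dD : 0 < d ^ D by apply: pow_lt.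
have : C * ph ^ D * 3 ^ D * d ^ D <= 1 * d ^ D by lra.
move/(Rmult_le_reg_r _ _ _ dD); lra.
Qed.


Lemma natpowE (a b : nat) : Nat.pow a b = expn a b.
Proof. by elim: b => [|b IH] //=; rewrite expnS IH. Qed.

Lemma up_nat (r : R) : 0 < r ->
  r < INR (Z.to_nat (up r)) /\ INR (Z.to_nat (up r)) <= r + 1.
Proof.
move=> r0; have [h1 h2] := archimed r.
have hz : Z.le 0 (up r).
  apply: le_IZR; lra.
rewrite INR_IZR_INZ Znat.Z2Nat.id //; lra.
Qed.

Lemma ln_ge (a y : R) : 0 < y -> exp a <= y -> a <= ln y.
Proof.
move=> y0 h; apply: Rnot_lt_le => hl.
have := exp_increasing _ _ hl; rewrite exp_ln //; lra.
Qed.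

Theorem mainTheorem14 :
  exists c C : R, (0 < c) /\ (0 < C) /\
  exists N : nat, forall n : nat, (N <= n)%coq_nat ->
  forall p q : R, (0 < p < 1) -> (0 < q < 1) ->
  (phat p q >= c * ln (INR n) / INR n) ->
  (flood_time_ge_prob n p q (C * ln (INR n) / ln (INR n * phat p q)) >= 1 - 1 / INR n).
Proof.
exists 1, (1/2); split; first lra; split; first lra.
exists (Nat.pow 3 10) => n Hn p q Hp Hq Hph.
set nR := INR n.
have e3 := exp_le_3.
have e10 : exp 10 <= 3 ^ 10.
  have -> : exp 10 = exp 1 ^ 10 by rewrite -exp_mulk; congr exp; simpl; ring.
  apply: pow_incr; have := exp_pos 1; lra.
have nbig : 3 ^ 10 <= nR.
  have -> : 3 ^ 10 = INR (Nat.pow 3 10) by rewrite pow_INR /=; ring.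
  exact: le_INR.
have n0 : 0 < nR by lra.
set L := ln nR.
have L10 : 10 <= L by apply: ln_ge; lra.
set ph := phat p q.
have Hph' : L <= nR * ph.
  move: Hph; rewrite -/nR -/L -/ph => Hph.
  have : 1 * L / nR * nR <= ph * nR by apply: Rmult_le_compat_r; lra.
  have -> : 1 * L / nR * nR = L by field; lra.
  lra.
have mu10 : 10 <= nR * ph by lra.
set mu := nR * ph in mu10 *.
have lmu1 : 1 <= ln mu by apply: ln_ge; lra.
set x := 1 / 2 * L / ln mu.
have x0 : 0 < x by rewrite /x; apply: Rdiv_lt_0_compat; lra.
have xL : x <= L / 2.
  rewrite /x; apply: Rmult_le_reg_r (_ : 0 < ln mu) _; first lra.
  have -> : 1 / 2 * L / ln mu * ln mu = L / 2 by field; lra.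
  nra.
have xmu : 2 * x * ln mu = L by rewrite /x; field; lra.
have nN : (0 < n)%N.
  apply/ssrnat.ltP; apply: INR_lt; rewrite -/nR /=; lra.
have Hp' : (0 < p < 1)%R by apply/andP; split; apply/RltP; [exact: (proj1 Hp) | exact: (proj2 Hp)].
have Hq' : (0 < q < 1)%R by apply/andP; split; apply/RltP; [exact: (proj1 Hq) | exact: (proj2 Hq)].
have ph0 : 0 <= ph by have := phat_ge0 Hp' Hq'; move/RleP.
have [Hx1 Hx2] := up_nat x0.
set H := Z.to_nat (up x) in Hx1 Hx2 *.
have mu0 : 0 < 9 * mu by lra.
have [HD1 HD2] := up_nat mu0.
set D := Z.to_nat (up (9 * mu)) in HD1 HD2 *.
have HDt : forall t : nat, (t <= H)%N -> INR t < x -> (D ^ t < n)%N.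
  move=> t _ ht; apply/ssrnat.ltP; apply: INR_lt; rewrite -natpowE pow_INR -/nR.
  have s1 : INR D ^ t <= (mu ^ 2) ^ t.
    apply: pow_incr; split; first exact: pos_INR.
    nra.
  have s2 : (mu ^ 2) = exp (2 * ln mu).
    have -> : 2 * ln mu = ln mu + ln mu by ring.
    rewrite exp_plus exp_ln; [ring | lra].
  have s3 : (mu ^ 2) ^ t = exp (INR t * (2 * ln mu)) by rewrite exp_mulk s2.
  have s4 : exp (INR t * (2 * ln mu)) < exp L.
    apply: exp_increasing; nra.
  rewrite /L exp_ln in s4; lra.
have HDt' : forall t : nat, (t <= H)%N -> (INR t < x)%R -> (D ^ t < n)%N.
  by move=> t h1 /RltP h2; apply: HDt.
have Hmb := main_bound Hp' Hq' nN HDt'.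
move/RleP: Hmb; rewrite -!INRE -RpowE => Hmb.
rewrite /flood_time_ge_prob -/H.
have Hmb' : 1 - INR H.+1 * nR * INR 'C(n, D) * ph ^ D <= Prob p q (flood_time_ge (H := H) x) := Hmb.
set K := INR 'C(n, D) * ph ^ D.
have K0 : 0 <= K by apply: Rmult_le_pos; [exact: pos_INR | exact: pow_le].
have HK : K * 3 ^ D <= 1.
  apply: tail_bound => //; rewrite -/nR -/mu; lra.
have H3 : nR ^ 9 <= 3 ^ D.
  have a1 : exp 1 ^ D <= 3 ^ D by apply: pow_incr; have := exp_pos 1; lra.
  have a2 : exp 1 ^ D = exp (INR D) by rewrite -exp_mulk Rmult_1_r.
  have a3 : exp (9 * L) <= exp (INR D).
    have Lmu : L <= mu := Hph'.
    apply: Rlt_le; apply: exp_increasing; lra.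
  have a4 : exp (9 * L) = nR ^ 9.
    have -> : 9 * L = INR 9 * L by simpl; ring.
    by rewrite exp_mulk /L exp_ln.
  lra.
have HK9 : K * nR ^ 9 <= 1.
  apply: Rle_trans HK; exact: Rmult_le_compat_l.
have HH : INR H.+1 <= nR.
  rewrite S_INR.
  have := exp_ineq1_le L; rewrite /L exp_ln // -/L; lra.
have n1 : 1 <= nR by lra.
have n39 : nR ^ 3 <= nR ^ 9.
  have -> : nR ^ 9 = nR ^ 3 * nR ^ 6 by ring.
  have : 1 <= nR ^ 6 by apply: pow_R1_Rle.
  have : 0 < nR ^ 3 by apply: pow_lt.
  nra.
have fin : INR H.+1 * nR * K <= 1 / nR.
  apply: (Rmult_le_reg_r _ _ _ n0).
  have -> : 1 / nR * nR = 1 by field; lra.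
  have : INR H.+1 * nR * K * nR <= nR ^ 3 * K.
    have -> : nR ^ 3 * K = nR * nR * K * nR by ring.
    apply: Rmult_le_compat_r; first lra.
    apply: Rmult_le_compat_r => //.
    apply: Rmult_le_compat_r; [lra | exact: HH].
  nra.
have E : INR H.+1 * nR * INR 'C(n, D) * ph ^ D = INR H.+1 * nR * K by rewrite /K; ring.
rewrite E in Hmb'.
rewrite /flood_time_ge_prob -/H.
apply: Rle_ge; lra.
Qed.
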